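(* Let $T\ge1$ be an integer, $\tau\in(0,1)$, $\beta\in(0,1)$, and let $R_f>0$ be a risk-free gross rate. Let $R_1,\dots,R_T$ be independent real random variables (gross risky returns). An investor with wealth $W_t>0$ chooses at each $t=0,\dots,T-1$ a risky share $\alpha_t\in[0,1]$, and wealth evolves as $W_{t+1}=W_t\big(\alpha_tR_{t+1}+(1-\alpha_t)R_f\big)$. Define the value recursively by $v^*_\tau(W_T)=W_T$ and, for $t=T-1,\dots,0$, $$v^*_\tau(W_t)=\max_{\alpha_t\in[0,1]}Q_\tau\big[\beta\,v^*_\tau(W_{t+1})\,\big|\,W_t\big].$$ Let $m_k=\max(Q_\tau[R_k],R_f)$. Then for every $t=0,\dots,T-1$, $$v^*_\tau(W_t)=\beta^{T-t}\,W_t\prod_{k=t+1}^{T}m_k,$$ and the optimal allocation is $\alpha^*_t=1$ if $Q_\tau[R_{t+1}]>R_f$, $\alpha^*_t=0$ if $Q_\tau[R_{t+1}]<R_f$, and any $\alpha_t\in[0,1]$ is optimal if $Q_\tau[R_{t+1}]=R_f$.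
   Context: For a real random variable $Z$ with CDF $F_Z$, $Q_\tau[Z]=\inf\{x\in\mathbb{R}: F_Z(x)\ge\tau\}$, and $Q_\tau[\,\cdot\mid W_t]$ denotes the $\tau$-quantile of the conditional law given current wealth $W_t$. *)

(* Defs.v *)
From HB Require Import structures.
From mathcomp Require Import all_boot all_order all_algebra.
From mathcomp Require Import all_classical all_reals all_analysis.
Set Implicit Arguments. Unset Strict Implicit. Unset Printing Implicit Defensive.
Import Order.TTheory GRing.Theory Num.Theory.
Local Open Scope classical_set_scope.
Local Open Scope ring_scope.

Definition quantile d (Om : measurableType d) (R : realType)
  (P : probability Om R) (tau : R) (Z : Om -> R) : R :=
  inf [set x : R | (tau%:E <= P [set w | (Z w <= x)%R])%E].

(* Mutual independence of the real random variables X_1, ..., X_n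
   (product rule for preimages of arbitrary Borel sets; taking B_k = setT
   recovers every subfamily). *)
Definition mutually_independent d (Om : measurableType d) (R : realType)
  (P : probability Om R) (n : nat) (X : nat -> {RV P >-> R}) : Prop :=
  forall B : nat -> set R, (forall k, measurable (B k)) ->
    P (\bigcap_(k in [set k | (1 <= k <= n)%N]) (X k @^-1` B k)) =
    (\prod_(1 <= k < n.+1) P (X k @^-1` B k))%E.

(* Value function by backward recursion on the number of remaining periods.
   vrem 0 w = w (terminal value v_T(W_T) = W_T); with n+1 periods remaining,
   i.e. at time t = Tn - (n+1), the next return is R_{t+1} = R_{Tn - n} and
     v_t(w) = max_{a in [0,1]} Q_tau[ beta v_{t+1}(w (a R_{t+1} + (1-a) Rf)) | W_t = w ].
   Since R_{t+1} is independent of W_t (a function of R_1..R_t), the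
   conditional law given W_t = w is the law of the expression with W_t
   replaced by the constant w. *)
Section Value.
Context d (Om : measurableType d) (R : realType) (P : probability Om R)
  (Tn : nat) (tau beta Rf : R) (Rs : nat -> {RV P >-> R}).

Fixpoint vrem (n : nat) : R -> R :=
  match n with
  | 0%N => fun w => w
  | n'.+1 => fun w =>
      sup [set y : R | exists2 a : R, 0 <= a <= 1 &
        y = quantile P tau
              (fun om => beta * vrem n' (w * (a * Rs (Tn - n') om + (1 - a) * Rf)))]
  end.

Definition vstar (t : nat) : R -> R := vrem (Tn - t).

Definition objective (t : nat) (a w : R) : R :=
  quantile P tau (fun om => beta * vstar t.+1 (w * (a * Rs t.+1 om + (1 - a) * Rf))).
End Value.

(* Main.v *)
Require Import Defs.
From HB Require Import structures.
From mathcomp Require Import all_boot all_order all_algebra.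
From mathcomp Require Import all_classical all_reals all_analysis.
Import Order.TTheory GRing.Theory Num.Theory.
Local Open Scope classical_set_scope.
Local Open Scope ring_scope.
From mathcomp Require Import lra.


Lemma final (R : realType) (c q b a : R) : 0 < c -> 0 <= a <= 1 ->
  (c * (a * q + (1 - a) * b) = c * Num.max q b <->
   ((b < q -> a = 1) /\ (q < b -> a = 0))).
Proof.
move=> c0 /andP[a0 a1].
have cn : c != 0 by rewrite gt_eqF.
rewrite /Num.max /Order.max.
have [qb|bq|qb] := ltgtP q b.
- split.
    move/(mulfI cn) => e; split => h //.
    have : a * (q - b) = 0 by rewrite mulrBr; lra.
    by move/eqP; rewrite mulf_eq0 subr_eq0 (lt_eqF qb) orbF => /eqP.
  by case=> _ /(_ isT) ->; congr (_ * _); lra.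
- split.
    move/(mulfI cn) => e; split => h //.
    have : (1 - a) * (q - b) = 0 by rewrite mulrBr; lra.
    move/eqP; rewrite mulf_eq0 !subr_eq0 (gt_eqF bq) orbF => /eqP; lra.
  by case=> /(_ isT) -> _; congr (_ * _); lra.
- subst; split => [_|_]; first by split.
  by congr (_ * _); lra.
Qed.

Lemma finalw (R : realType) (c w q b a : R) : 0 < c -> 0 < w -> 0 <= a <= 1 ->
  (c * w * (a * q + (1 - a) * b) = c * Num.max q b * w <->
   ((b < q -> a = 1) /\ (q < b -> a = 0))).
Proof. by move=> c0 w0 ha; rewrite [c * _ * w]mulrAC; apply: final => //; apply: mulr_gt0. Qed.

Section Q.
Context (R : realType) (d : measure_display) (Om : measurableType d)
  (P : probability Om R) (tau : R).

Lemma q_nonempty (Z : {RV P >-> R}) : tau < 1 ->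
  [set x : R | (tau%:E <= P [set w | (Z w <= x)%R])%E] !=set0.
Proof.
move=> t1.
have h1 : (tau%:E < 1)%E by rewrite lte_fin.
have H : \forall x \near +oo, (tau%:E < cdf Z x)%E := cvg_cdfy1 Z (open_ereal_gt' h1).
case: H => M [_ HM].
exists (M + 1) => /=.
have hM : M < M + 1 by rewrite ltrDl.
have h := HM _ hM.
apply/ltW; move: h; rewrite /cdf /distribution /pushforward.
suff -> : Z @^-1` `]-oo, M + 1] = [set w | (Z w <= M + 1)%R] by [].
by apply/seteqP; split=> w /=; rewrite in_itv.
Qed.

Lemma q_lb (Z : Om -> R) : 0 < tau -> (forall om, 0 < Z om) ->
  lbound [set x : R | (tau%:E <= P [set w | (Z w <= x)%R])%E] 0.
Proof.
move=> t0 Zp x /= h; rewrite leNgt; apply/negP => x0; move: h.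
suff -> : [set w | (Z w <= x)%R] = set0 by rewrite measure0 lee_fin leNgt t0.
apply/seteqP; split=> w //= h.
by have := lt_le_trans (Zp w) h; rewrite ltNge (ltW x0).
Qed.

Lemma q_const (c : R) : 0 < tau <= 1 -> quantile P tau (fun _ => c) = c.
Proof.
case/andP=> t0 t1; rewrite /quantile.
have E : [set x : R | (tau%:E <= P [set _ : Om | (c <= x)%R])%E] = [set x | (c <= x)%R].
  apply/seteqP; split=> x /=.
    apply: contraPP => /negP; rewrite -ltNge => xc.
    suff -> : [set _ : Om | (c <= x)%R] = set0 by rewrite measure0 lee_fin leNgt t0.
    by apply/seteqP; split=> w //=; rewrite leNgt xc.
  move=> cx; suff -> : [set _ : Om | (c <= x)%R] = setT by rewrite probability_setT lee_fin.
  by apply/seteqP; split=> w //=.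
rewrite E; apply/le_anti/andP; split.
  have lbE : has_lbound [set x : R | (c <= x)%R] by exists c => y.
  by apply: (ge_inf lbE) => /=.
by apply: lb_le_inf; [exists c => /= | move=> y].
Qed.

Lemma q_affine (Z : Om -> R) (k e : R) : 0 < k ->
  [set x : R | (tau%:E <= P [set w | (Z w <= x)%R])%E] !=set0 ->
  has_lbound [set x : R | (tau%:E <= P [set w | (Z w <= x)%R])%E] ->
  quantile P tau (fun om => k * Z om + e) = k * quantile P tau Z + e.
Proof.
move=> k0 ne lb; rewrite /quantile.
set S' := [set x : R | (tau%:E <= P [set w | (k * Z w + e <= x)%R])%E].
set S := [set x : R | (tau%:E <= P [set w | (Z w <= x)%R])%E].
have eq x : [set w | (k * Z w + e <= x)%R] = [set w | (Z w <= (x - e) / k)%R].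
  by apply/seteqP; split=> w /=; rewrite ler_pdivlMr // -lerBrDr mulrC.
have SS' y : S y -> S' (k * y + e).
  by rewrite /S' /= eq addrK mulrAC mulfV ?gt_eqF ?mul1r.
have S'S x : S' x -> S ((x - e) / k) by rewrite /S' /= eq.
have ne' : S' !=set0 by case: ne => y /SS' h; exists (k * y + e).
have lb' : has_lbound S'.
  case: lb => l hl; exists (k * l + e) => x /S'S /hl.
  by rewrite ler_pdivlMr // -lerBrDr mulrC.
apply/le_anti/andP; split.
  have h : (inf S' - e) / k <= inf S.
    apply: lb_le_inf => // y Sy.
    rewrite ler_pdivrMr // mulrC lerBlDr; exact: ge_inf lb' _ (SS' _ Sy).
  by move: h; rewrite ler_pdivrMr // mulrC lerBlDr.
apply: lb_le_inf => // x /S'S h.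
have := ge_inf lb h; rewrite ler_pdivlMr // -lerBrDr mulrC => ->.
by [].
Qed.
Lemma q_alloc (Z : {RV P >-> R}) (c a b : R) : 0 < tau < 1 ->
  (forall om, 0 < Z om) -> 0 < c -> 0 <= a <= 1 ->
  quantile P tau (fun om => c * (a * Z om + (1 - a) * b)) =
  c * (a * quantile P tau Z + (1 - a) * b).
Proof.
case/andP=> t0 t1 Zp c0 /andP[a0 a1].
have [->|an0] := eqVneq a 0.
  have -> : (fun om => c * (0 * Z om + (1 - 0) * b)) = (fun _ => c * ((1 - 0) * b)).
    by apply: funext => om; rewrite mul0r add0r.
  by rewrite q_const ?t0 ?(ltW t1) // mul0r add0r.
have ap : 0 < a by rewrite lt_neqAle eq_sym an0.
have -> : (fun om => c * (a * Z om + (1 - a) * b)) =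
          (fun om => (c * a) * Z om + c * ((1 - a) * b)).
  by apply: funext => om; rewrite mulrDr mulrA.
rewrite q_affine ?mulr_gt0 //; first by rewrite mulrDr mulrA.
  exact: q_nonempty.
by exists 0; apply: q_lb.
Qed.

Lemma sup_seg (c q b : R) : 0 < c ->
  sup [set y : R | exists2 a : R, 0 <= a <= 1 & y = c * (a * q + (1 - a) * b)]
  = c * Num.max q b.
Proof.
move=> c0.
set S := [set y : R | _].
have ub : ubound S (c * Num.max q b).
  move=> y [a /andP[a0 a1] ->]; rewrite ler_pM2l //.
  have h1 : q <= Num.max q b by rewrite le_max lexx.
  have h2 : b <= Num.max q b by rewrite le_max lexx orbT.
  have := ler_wpM2l a0 h1; have a1' : 0 <= 1 - a by rewrite subr_ge0.
  have := ler_wpM2l a1' h2.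
  by move=> u v; apply: le_trans (lerD v u) _; rewrite -mulrDl addrC subrK mul1r.
apply/le_anti/andP; split.
  by apply: ge_sup => //; exists (c * (0 * q + (1 - 0) * b)); exists 0 => //; rewrite lexx ler01.
have hS : has_ubound S by exists (c * Num.max q b).
have [qb|bq] := leP b q.
  apply: (@le_trans _ _ (c * q)); last apply: (ub_le_sup hS).
    by rewrite ler_pM2l // ge_max lexx qb.
  exists 1; first by rewrite ler01 lexx.
  by rewrite mul1r subrr mul0r addr0.
apply: (@le_trans _ _ (c * b)); last apply: (ub_le_sup hS).
  by rewrite ler_pM2l // ge_max lexx (ltW bq).
exists 0; first by rewrite ler01 lexx.
by rewrite mul0r add0r subr0 mul1r.
Qed.
End Q.
Section V.
Context (R : realType) (d : measure_display) (Om : measurableType d)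
  (P : probability Om R) (Tn : nat) (tau beta Rf : R)
  (Rs : nat -> {RV P >-> R}).

Let m k := Num.max (quantile P tau (Rs k)) Rf.
Let K n := beta ^+ n * \prod_((Tn - n).+1 <= k < Tn.+1) m k.

Lemma m_gt0 k : 0 < Rf -> 0 < m k.
Proof. by move=> h; rewrite /m lt_max h orbT. Qed.

Lemma K_gt0 n : 0 < beta -> 0 < Rf -> 0 < K n.
Proof.
move=> b0 r0; rewrite /K mulr_gt0 ?exprn_gt0 //.
by apply: prodr_gt0 => k _; apply: m_gt0.
Qed.

Lemma K_S n : (n < Tn)%N -> K n.+1 = beta * K n * m (Tn - n).
Proof.
move=> nT; rewrite /K exprS.
have -> : (Tn - n.+1).+1 = (Tn - n)%N by rewrite subnS prednK // subn_gt0.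
rewrite big_ltn; last by rewrite ltnS leq_subr.
by rewrite [m _ * _]mulrC !mulrA.
Qed.

Lemma obj_eq n w a : 0 < tau < 1 -> 0 < beta -> 0 < Rf ->
  (forall k, (1 <= k <= Tn)%N -> forall om, 0 < Rs k om) ->
  (n < Tn)%N -> 0 < w -> 0 <= a <= 1 ->
  (forall x, 0 < x -> vrem Tn tau beta Rf Rs n x = K n * x) ->
  quantile P tau (fun om => beta * vrem Tn tau beta Rf Rs n
      (w * (a * Rs (Tn - n) om + (1 - a) * Rf)))
  = (beta * K n * w) * (a * quantile P tau (Rs (Tn - n)) + (1 - a) * Rf).
Proof.
move=> tt b0 r0 Rp nT w0 /andP[a0 a1] IH.
have Rp' om : 0 < Rs (Tn - n) om.
  by apply: Rp; rewrite subn_gt0 nT leq_subr.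
rewrite -q_alloc //; last by rewrite a0 a1.
  congr quantile; apply: funext => om.
  rewrite IH; first by rewrite !mulrA.
  apply: mulr_gt0 => //.
  have [->|an0] := eqVneq a 0; first by rewrite mul0r add0r subr0 mul1r.
  have ap : 0 < a by rewrite lt_neqAle eq_sym an0.
  apply: (@lt_le_trans _ _ (a * Rs (Tn - n) om)); first exact: mulr_gt0.
  by rewrite lerDl mulr_ge0 // ?subr_ge0 // ltW.
by apply: mulr_gt0 => //; apply: mulr_gt0 => //; exact: K_gt0.
Qed.

Lemma vrem_lin n : 0 < tau < 1 -> 0 < beta -> 0 < Rf ->
  (forall k, (1 <= k <= Tn)%N -> forall om, 0 < Rs k om) ->
  (n <= Tn)%N -> forall x, 0 < x -> vrem Tn tau beta Rf Rs n x = K n * x.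
Proof.
move=> tt b0 r0 Rp; elim: n => [|n IH] nT x x0.
  by rewrite /= /K expr0 mul1r subn0 big_geq // mul1r.
have nT' : (n < Tn)%N by [].
rewrite /=.
have -> : [set y : R | exists2 a : R, 0 <= a <= 1 &
        y = quantile P tau
              (fun om => beta * vrem Tn tau beta Rf Rs n (x * (a * Rs (Tn - n) om + (1 - a) * Rf)))]
  = [set y : R | exists2 a : R, 0 <= a <= 1 &
        y = (beta * K n * x) * (a * quantile P tau (Rs (Tn - n)) + (1 - a) * Rf)].
  apply/seteqP; split=> y [a ha ->]; exists a => //.
    by rewrite obj_eq // => z z0; apply: IH => //; apply: ltnW.
  by rewrite obj_eq // => z z0; apply: IH => //; apply: ltnW.
rewrite sup_seg; last by apply: mulr_gt0 => //; apply: mulr_gt0 => //; exact: K_gt0.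
by rewrite K_S // -/(m _) mulrAC.
Qed.
End V.

Theorem mainTheorem4 (R : realType) (d : measure_display) (Om : measurableType d)
  (P : probability Om R) (Tn : nat) (tau beta Rf : R)
  (Rs : nat -> {RV P >-> R}) :
  (1 <= Tn)%N -> 0 < tau < 1 -> 0 < beta < 1 -> 0 < Rf ->
  mutually_independent Tn Rs ->
  (forall k, (1 <= k <= Tn)%N -> forall om, 0 < Rs k om) ->
  forall t : nat, (t < Tn)%N -> forall w : R, 0 < w ->
    vstar Tn tau beta Rf Rs t w =
      beta ^+ (Tn - t) * w *
        \prod_(t.+1 <= k < Tn.+1) Num.max (quantile P tau (Rs k)) Rf
    /\ (forall a : R, 0 <= a <= 1 ->
         (objective Tn tau beta Rf Rs t a w = vstar Tn tau beta Rf Rs t w <->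
          ((Rf < quantile P tau (Rs t.+1) -> a = 1) /\
           (quantile P tau (Rs t.+1) < Rf -> a = 0)))).

Proof.
move=> T1 tt /andP[b0 b1] r0 _ Rp t tT w w0.
have Hlin := @vrem_lin R d Om P Tn tau beta Rf Rs.
split.
  rewrite /vstar Hlin ?leq_subr // subKn ?(ltnW tT) //.
  by rewrite mulrAC.
move=> a ha.
rewrite /objective /vstar.
have e1 : (Tn - t = (Tn - t.+1).+1)%N by rewrite subnSK.
have e2 : t.+1 = (Tn - (Tn - t.+1))%N by rewrite subKn.
rewrite e1.
set n := (Tn - t.+1)%N.
have nT : (n < Tn)%N by rewrite /n ltn_subrL (leq_ltn_trans (leq0n t) tT).
rewrite e2 obj_eq //; last by move=> x x0; apply: Hlin => //; apply: ltnW.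
rewrite Hlin // K_S // -e2.
apply: finalw => //.
by apply: mulr_gt0 => //; apply: mulr_gt0; rewrite ?exprn_gt0 //; apply: prodr_gt0 => k _; rewrite lt_max r0 orbT.
Qed.
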